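(* Let $(X,d)$ be a nonempty compact metric space and let $F:X\rightarrow K(X)$ be a set-valued $(\beta_x,r_x)$-local contraction on $X$. Then: (a) if $X$ is $r$-chainable for some $r>0$ such that $F$ is a $(\beta,r)$-uniform local contraction for some $\beta\in[0,1)$, then $\mathrm{Fix}(F)\neq\varnothing$; (b) if $X$ is the union of finitely many pairwise disjoint connected components and $F(x)$ is connected for every $x\in X$, then there is a positive integer $m$ such that $\mathrm{Fix}(F^{(m)})\neq\varnothing$.
   Context: $K(X)$ is the set of nonempty compact subsets of $X$; $H$ is the Hausdorff distance $H(A,B)=\max\{\sup_{a\in A}d(a,B),\sup_{b\in B}d(b,A)\}$ with $d(y,A)=\inf_{a\in A}d(a,y)$; $B_r(x)=\{z\in X:d(x,z)\le r\}$. $F$ is a set-valued $(\beta_x,r_x)$-local contraction if for every $x\in X$ there exist $r_x>0$ and $\beta_x\in[0,1)$ such that $H(F(y),F(z))\le\beta_x d(y,z)$ for all $y,z\in B_{r_x}(x)$; it is a $(\beta,r)$-uniform local contraction if this holds with $\beta_x=\beta$ and $r_x=r$ independent of $x$. An $r$-chain from $x$ to $y$ is a finite sequence $z_0=x,\ldots,z_n=y$ with $d(z_{i-1},z_i)<r$; $X$ is $r$-chainable if any two points are joined by an $r$-chain. Composition of set-valued maps: $(G\circ F)(x)=\bigcup\{G(y):y\in F(x)\}$, and $F^{(m)}$ is the $m$-fold composition of $F$ with itself. $\mathrm{Fix}(G)=\{x\in X: x\in G(x)\}$. *)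

(* Defs.v *)
From HB Require Import structures.
From mathcomp Require Import all_boot all_order all_algebra.
From mathcomp Require Import all_classical all_reals all_analysis.
Set Implicit Arguments. Unset Strict Implicit. Unset Printing Implicit Defensive.
Import Order.TTheory GRing.Theory Num.Theory.
Local Open Scope classical_set_scope.
Local Open Scope ring_scope.

Section Defs.
Context {R : realType} {X : metricType R}.

Definition pdist (y : X) (A : set X) : R := inf [set mdist a y | a in A].

Definition hausdorff_dist (A B : set X) : R :=
  Num.max (sup [set pdist a B | a in A]) (sup [set pdist b A | b in B]).

Definition cball (x : X) (r : R) : set X := [set z | mdist x z <= r].

Definition KX_valued (F : X -> set X) : Prop :=
  forall x, F x !=set0 /\ compact (F x).

Definition local_contraction (F : X -> set X) : Prop :=
  forall x, exists r : R, exists beta : R,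
    0 < r /\ 0 <= beta < 1 /\
    forall y z, cball x r y -> cball x r z ->
      hausdorff_dist (F y) (F z) <= beta * mdist y z.

Definition uniform_local_contraction (F : X -> set X) (beta r : R) : Prop :=
  0 < r /\ 0 <= beta < 1 /\
  forall x y z, cball x r y -> cball x r z ->
    hausdorff_dist (F y) (F z) <= beta * mdist y z.

Definition chainable (r : R) : Prop :=
  forall x y : X, exists (n : nat) (z : nat -> X),
    z 0%N = x /\ z n = y /\ forall i, (i < n)%N -> mdist (z i) (z i.+1) < r.

Definition setcomp (G F : X -> set X) : X -> set X :=
  fun x => \bigcup_(y in F x) G y.

Fixpoint setiter (F : X -> set X) (m : nat) : X -> set X :=
  match m with
  | 0%N => fun x => [set x]
  | m'.+1 => setcomp F (setiter F m')
  end.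

Definition Fix (G : X -> set X) : set X := [set x | G x x].

End Defs.

(* Main.v *)
Require Import Defs.
From HB Require Import structures.
From mathcomp Require Import all_boot all_order all_algebra.
From mathcomp Require Import all_classical all_reals all_analysis.
Import Order.TTheory GRing.Theory Num.Theory.
Local Open Scope classical_set_scope.
Local Open Scope ring_scope.
From mathcomp Require Import ring lra.
From mathcomp Require finmap.
Import numFieldTopology.Exports numFieldNormedType.Exports.

Section S.
Context {R : realType} {X : metricType R}.
Local Notation d := (@mdist R X).

Lemma dsym x y : d x y = d y x. Proof. exact: metric_sym. Qed.
Lemma dtri x y z : d x z <= d x y + d y z. Proof. exact: metric_triangle. Qed.
Lemma dge0 x y : 0 <= d x y. Proof. exact: mdist_ge0. Qed.
Lemma dxx x : d x x = 0. Proof. exact: mdistxx. Qed.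

Lemma nbhs_mball (x : X) e : 0 < e -> nbhs x [set y | d x y < e].
Proof.
move=> e0; rewrite -metricType_numDomainType.filter_from_mdist_nbhs.
by exists e.
Qed.

Lemma open_mball (x : X) e : open [set y | d x y < e].
Proof.
rewrite openE => y /= xy; rewrite /interior /=.
have H : 0 < e - d x y by rewrite subr_gt0.
have := nbhs_mball y _ H; apply: filterS.
move=> z /= yz; have := dtri x y z; lra.
Qed.

Lemma pdist_ge0 y (A : set X) : 0 <= pdist y A.
Proof.
rewrite /pdist; have [[a Aa]|A0] := pselect (A !=set0).
  by apply: lb_le_inf; [exists (d a y), a|move=> _ [b _ <-]; exact: dge0].
have -> : A = set0 by apply/seteqP; split => // z Az; apply: A0; exists z.
by rewrite image_set0 inf0.
Qed.

Lemma pdist_le y (A : set X) a : A a -> pdist y A <= d a y.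
Proof.
move=> Aa; apply: ge_inf; last by exists a.
by exists 0 => _ [b _ <-]; exact: dge0.
Qed.

Lemma pdist_adh y (A : set X) e : A !=set0 -> 0 < e ->
  exists2 a, A a & d a y < pdist y A + e.
Proof.
move=> [a Aa] e0.
have hi : has_inf [set d a y | a in A].
  split; first by exists (d a y), a.
  by exists 0 => _ [b _ <-]; exact: dge0.
have [_ [b Ab <-] H] := inf_adherent e0 hi.
by exists b.
Qed.

Lemma pdist_le_hd (M : R) (A B : set X) a :
  (forall x y, d x y <= M) -> A a -> B !=set0 ->
  pdist a B <= hausdorff_dist A B.
Proof.
move=> HM Aa [b Bb]; rewrite /hausdorff_dist.
rewrite le_max; apply/orP; left.
apply: ub_le_sup; last by exists a.
exists M => _ [a' _ <-]; exact: le_trans (pdist_le _ _ _ Bb) (HM _ _).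
Qed.


Lemma minl (x y : R) : Num.min x y <= x. Proof. by rewrite ge_min lexx. Qed.
Lemma minr (x y : R) : Num.min x y <= y. Proof. by rewrite ge_min lexx orbT. Qed.

Definition Plift (G : X -> set X) (g rho : R) :=
  forall y z a e, d y z < rho -> G y a -> 0 < e ->
    exists b, G z b /\ d a b < g * d y z + e.

Lemma Plift_of_H (F : X -> set X) M b rho :
  (forall x, F x !=set0) -> (forall x y, d x y <= M) ->
  (forall y z, d y z < rho -> hausdorff_dist (F y) (F z) <= b * d y z) ->
  Plift F b rho.
Proof.
move=> Fne HM HH y z a e yz Fya e0.
have h1 := pdist_le_hd _ _ _ _ HM Fya (Fne z).
have h2 := HH _ _ yz.
have [c Fzc h3] := pdist_adh a _ _ (Fne z) e0.
exists c; split => //; rewrite dsym; lra.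
Qed.

Lemma Plift_comp (F G : X -> set X) b g rho :
  0 <= b <= 1 -> 0 <= g <= 1 -> Plift F b rho -> Plift G g rho ->
  Plift (setcomp F G) (b * g) rho.
Proof.
move=> /andP[b0 b1] /andP[g0 g1] PF PG y z a e yz [u Gyu Fua] e0.
have e1p : 0 < Num.min (e / 2) (rho - d y z).
  by rewrite lt_min divr_gt0 //= subr_gt0.
have [u' [Gzu' uu']] := PG y z u _ yz Gyu e1p.
have uu'r : d u u' < rho.
  have := minr (e / 2) (rho - d y z) .
  have : g * d y z <= d y z by rewrite ler_piMl // dge0.
  lra.
have e2 : 0 < e / 2 by rewrite divr_gt0.
have [c [Fu'c ac]] := PF u u' a _ uu'r Fua e2.
exists c; split; first by exists u'.
have hm := minl (e / 2) (rho - d y z).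
have h4 : b * d u u' <= b * (g * d y z + e / 2).
  by rewrite ler_wpM2l // ltW // (lt_le_trans uu') // lerD2l.
have h5 : b * (e / 2) <= e / 2 by rewrite ler_piMl // ltW.
rewrite mulrDr mulrA in h4.
lra.
Qed.

Lemma Plift_iter (F : X -> set X) b rho k :
  0 <= b <= 1 -> Plift F b rho -> Plift (setiter F k) (b ^+ k) rho.
Proof.
move=> hb PF; elim: k => [|k IH].
  move=> y z a e yz /= -> e0; exists z; split => //.
  by rewrite expr0 mul1r ltrDl.
rewrite exprSr /=.
rewrite mulrC; apply: Plift_comp => //.
by rewrite exprn_ge0 ?exprn_ile1 //; case/andP: hb.
Qed.


Definition csum (z : nat -> X) n := \sum_(i < n) d (z i) (z i.+1).
Definition steps (z : nat -> X) n rho := forall i, (i < n)%N -> d (z i) (z i.+1) < rho.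

Lemma csum_ge0 z n : 0 <= csum z n.
Proof. by apply: sumr_ge0 => i _; exact: dge0. Qed.

Lemma csumS z n : csum z n.+1 = csum z n + d (z n) (z n.+1).
Proof. by rewrite /csum big_ord_recr. Qed.

Lemma dist_le_csum z n : d (z 0%N) (z n) <= csum z n.
Proof.
elim: n => [|n IH]; first by rewrite /csum big_ord0 dxx.
rewrite csumS; have := dtri (z 0%N) (z n) (z n.+1); lra.
Qed.

Lemma csum_ext z w n : (forall i, (i <= n)%N -> z i = w i) -> csum z n = csum w n.
Proof.
move=> H; apply: eq_bigr => i _; have hi := ltn_ord i; rewrite (H i) ?(ltnW hi) // (H i.+1) //.
Qed.

Lemma lift G g rho : 0 <= g <= 1 -> Plift G g rho ->
  forall n z, steps z n rho -> forall a, G (z 0%N) a -> forall e, 0 < e ->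
  exists w : nat -> X, [/\ w 0%N = a, G (z n) (w n), steps w n rho &
     csum w n <= g * csum z n + e].
Proof.
move=> /andP[g0 g1] PG; elim => [|n IH] z sz a Ga e e0.
  exists (fun _ => a); split => //; try by move=> i.
  by rewrite /csum !big_ord0 mulr0 add0r ltW.
have e2 : 0 < e / 2 by rewrite divr_gt0.
have [|w [w0 Gw sw cw]] := IH z _ a Ga _ e2.
  by move=> i ilt; apply: sz; rewrite ltnS ltnW.
have zn := sz n (ltnSn n).
have ep : 0 < Num.min (e / 2) (rho - g * d (z n) (z n.+1)).
  rewrite lt_min e2 /= subr_gt0.
  by apply: le_lt_trans zn; rewrite ler_piMl // dge0.
have [b [Gb wb]] := PG _ _ _ _ zn Gw ep.
pose w' i := if (i <= n)%N then w i else b.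
have ww' : forall i, (i <= n)%N -> w i = w' i by move=> i hi; rewrite /w' hi.
exists w'; split.
- by rewrite /w' leq0n.
- by rewrite /w' ltnn.
- move=> i; rewrite ltnS leq_eqVlt => /orP[/eqP ->|ilt].
    rewrite /w' ltnn leqnn.
    have := minr (e / 2) (rho - g * d (z n) (z n.+1)); lra.
  rewrite /w' ilt (ltnW ilt); exact: sw.
- rewrite !csumS -(csum_ext _ _ _ ww') /w' leqnn ltnn.
  have := minl (e / 2) (rho - g * d (z n) (z n.+1)).
  rewrite mulrDr; lra.
Qed.


Lemma small_disp G g rho : 0 <= g < 1 -> Plift G g rho ->
  (exists n z, steps z n rho /\ G (z 0%N) (z n)) ->
  forall e, 0 < e -> exists x y, G x y /\ d x y < e.
Proof.
move=> /andP[g0 g1] PG [n0 [z0 [sz0 Gz0]]].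
have hg : 0 <= g <= 1 by rewrite g0 ltW.
pose V := [set s | exists n z, [/\ steps z n rho, G (z 0%N) (z n) & s = csum z n]].
have hV : has_inf V.
  split; first by exists (csum z0 n0), n0, z0.
  by exists 0 => _ [n [z [_ _ ->]]]; exact: csum_ge0.
have m0 : inf V <= 0.
  rewrite leNgt; apply/negP => mpos.
  pose del := (1 - g) * inf V / 4.
  have delp : 0 < del by rewrite /del divr_gt0 // mulr_gt0 // subr_gt0.
  have [_ [n [z [sz Gz ->]]] hs] := inf_adherent delp hV.
  have [w [w0 Gw sw cw]] := lift _ _ _ hg PG _ _ sz _ Gz _ delp.
  have : V (csum w n) by exists n, w; split=> //; rewrite w0.
  move=> /(ge_inf (proj2 hV)) hm.
  have h1 : g * csum z n <= g * (inf V + del) by rewrite ler_wpM2l // ltW.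
  have h2 : g * del <= del by rewrite ler_piMl // ltW.
  have h3 : 4 * del = inf V - g * inf V by rewrite /del; field.
  rewrite mulrDr in h1.
  lra.
move=> e e0; have [_ [n [z [sz Gz ->]]] hs] := inf_adherent e0 hV.
exists (z 0%N), (z n); split => //; have := dist_le_csum z n; lra.
Qed.


Fixpoint Dk (F : X -> set X) (k : nat) (u v : X) : R :=
  match k with 0%N => d u v | k'.+1 => inf [set Dk F k' w v | w in F u] end.

Section DkF.
Variable F : X -> set X.
Hypothesis Fne : forall x, F x !=set0.

Lemma Dk_ge0 k u v : 0 <= Dk F k u v.
Proof.
elim: k u => [|k IH] u /=; first exact: dge0.
have [w Fw] := Fne u.
by apply: lb_le_inf; [exists (Dk F k w v), w | move=> _ [w' _ <-]].
Qed.

Lemma Dk_le k u w v : F u w -> Dk F k.+1 u v <= Dk F k w v.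
Proof.
move=> Fw; apply: ge_inf; last by exists w.
by exists 0 => _ [w' _ <-]; exact: Dk_ge0.
Qed.

Lemma setiter_inner k x y :
  setiter F k.+1 x y <-> exists w, F x w /\ setiter F k w y.
Proof.
elim: k x y => [|k IH] x y.
  split; first by move=> [u /= -> Fy]; exists y.
  by move=> [w [Fw /= ->]]; exists x.
split.
  move=> [u /IH [w [Fw Hwu]] Fuy]; exists w; split => //; by exists u.
move=> [w [Fw [u Hwu Fuy]]]; exists u => //; apply/IH; by exists w.
Qed.

Lemma Dk_setiter k x y v : setiter F k x y -> Dk F k x v <= d y v.
Proof.
elim: k x => [|k IH] x; first by move=> /= ->.
move=> /setiter_inner [w [Fw Hw]].
exact: le_trans (Dk_le _ _ _ _ Fw) (IH _ Hw).
Qed.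

Lemma Dk_lip_r k u v v' : Dk F k u v' <= Dk F k u v + d v v'.
Proof.
elim: k u => [|k IH] u /=; first exact: dtri.
have [w Fw] := Fne u.
rewrite -lerBlDr; apply: lb_le_inf; first by exists (Dk F k w v), w.
move=> _ [w' Fw' <-]; rewrite lerBlDr.
exact: le_trans (Dk_le _ _ _ _ Fw') (IH _).
Qed.

Lemma Dk_lip_l b rho k u u' v : 0 <= b <= 1 -> Plift F b rho ->
  d u u' < rho -> Dk F k u' v <= Dk F k u v + d u u'.
Proof.
move=> /andP[b0 b1] PF; elim: k u u' => [|k IH] u u' uu' /=.
  by have := dtri u' u v; rewrite (dsym u' u); lra.
have [w Fw] := Fne u.
rewrite -lerBlDr; apply: lb_le_inf; first by exists (Dk F k w v), w.
move=> _ [w1 Fw1 <-]; rewrite lerBlDr.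
apply/ler_addgt0Pr => e e0.
have ep : 0 < Num.min e (rho - d u u') by rewrite lt_min e0 subr_gt0.
have [w2 [Fw2 ww]] := PF _ _ _ _ uu' Fw1 ep.
have hb : b * d u u' <= d u u' by rewrite ler_piMl // dge0.
have hm1 := minl e (rho - d u u').
have hm2 := minr e (rho - d u u').
have ww' : d w1 w2 < rho by lra.
have := IH _ _ ww'.
have := Dk_le k u' w2 v Fw2.
lra.
Qed.

End DkF.


Lemma cont_of_lip (f : X -> R) rho c : 0 < rho -> 0 < c ->
  (forall u u', d u u' < rho -> f u' <= f u + c * d u u') -> continuous f.
Proof.
move=> r0 c0 Hf x; apply/cvgrPdist_lt => e e0.
have ep : 0 < Num.min rho (e / (2 * c)).
  by rewrite lt_min r0 /= divr_gt0 // mulr_gt0.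
apply: filterS (nbhs_mball x _ ep) => t /= xt.
have h1 := minl rho (e / (2 * c)).
have h2 := minr rho (e / (2 * c)).
have xtr : d x t < rho by lra.
have h3 := Hf _ _ xtr.
have h4 : f x <= f t + c * d x t.
  by rewrite dsym; apply: Hf; rewrite dsym.
have h5 : c * d x t < c * (e / (2 * c)).
  by rewrite ltr_pM2l //; lra.
have h6 : c * (e / (2 * c)) = e / 2 by field; rewrite gt_eqF.
rewrite ltr_distlC; apply/andP; split; lra.
Qed.

Section DkF2.
Variable F : X -> set X.
Hypothesis Fne : forall x, F x !=set0.
Hypothesis Fcpt : forall x, compact (F x).
Variables b rho : R.
Hypothesis hb : 0 <= b <= 1.
Hypothesis r0 : 0 < rho.
Hypothesis PF : Plift F b rho.

Lemma Dk_cont k v : continuous (fun u => Dk F k u v).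
Proof.
apply: (cont_of_lip _ _ _ r0 (@ltr01 R)) => u u' uu'.
rewrite mul1r; exact: (@Dk_lip_l F Fne b rho k u u' v hb PF uu').
Qed.

Lemma Dk_diag_cont k : continuous (fun u => Dk F k u u).
Proof.
have c0 : (0 : R) < 2 by [].
apply: (cont_of_lip _ _ _ r0 c0) => u u' uu'.
have := (@Dk_lip_l F Fne b rho k u u' u' hb PF uu').
have := (@Dk_lip_r F Fne k u u u').
lra.
Qed.

Lemma Dk_zero k u v : Dk F k u v = 0 -> setiter F k u v.
Proof.
elim: k u => [|k IH] u /=; first by move/mdist_positivity ->.
move=> H0.
have hc : {within F u, continuous (fun w => Dk F k w v)}.
  by apply: continuous_subspaceT; exact: Dk_cont.
have [c cin cmin] := compact_EVT_min (Fne u) (Fcpt u) hc.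
have Fc : F u c by rewrite inE in cin.
have : Dk F k c v <= 0.
  rewrite -H0; apply: lb_le_inf; first by have [w Fw] := Fne u; exists (Dk F k w v), w.
  by move=> _ [w Fw <-]; apply: cmin; rewrite inE.
move=> H1; have H2 : Dk F k c v = 0.
  by apply/eqP; rewrite eq_le H1 Dk_ge0.
apply/setiter_inner; exists c; split => //; exact: IH.
Qed.

End DkF2.


Lemma fix_main (F : X -> set X) b rho m :
  compact [set: X] -> [set: X] !=set0 ->
  (forall x, F x !=set0) -> (forall x, compact (F x)) ->
  0 <= b < 1 -> 0 < rho -> Plift F b rho -> (0 < m)%N ->
  (exists n z, steps z n rho /\ setiter F m (z 0%N) (z n)) ->
  exists x, setiter F m x x.
Proof.
move=> Xc Xne Fne Fcpt /andP[b0 b1] r0 PF m0 hch.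
have hb : 0 <= b <= 1 by rewrite b0 ltW.
have PG := @Plift_iter F b rho m hb PF.
have hg : 0 <= b ^+ m < 1 by rewrite exprn_ge0 // exprn_ilt1 // -lt0n.
have sd := small_disp _ _ _ hg PG hch.
have hc : {within [set: X], continuous (fun u => Dk F m u u)}.
  by apply: continuous_subspaceT; exact: (Dk_diag_cont _ Fne _ _ hb r0 PF m).
have [x0 _ hmin] := compact_EVT_min Xne Xc hc.
exists x0; apply: (Dk_zero _ Fne Fcpt _ _ hb r0 PF).
apply/eqP; rewrite eq_le (Dk_ge0 _ Fne) andbT.
apply/ler_addgt0Pr => e e0; rewrite add0r.
have [x [y [Gxy dxy]]] := sd e e0.
have h1 := hmin x (mem_set I).
have h2 := Dk_setiter _ Fne _ _ _ x Gxy.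
rewrite dsym in h2; lra.
Qed.


Lemma seq_lb (s : seq X) (f : X -> R) : (forall i, 0 < f i) ->
  exists2 c, 0 < c & forall i, i \in s -> c <= f i.
Proof.
move=> fp; elim: s => [|a s [c c0 IH]]; first by exists 1.
exists (Num.min c (f a)); first by rewrite lt_min c0 fp.
move=> i; rewrite in_cons => /orP[/eqP ->|iS]; first exact: minr.
exact: le_trans (minl _ _) (IH _ iS).
Qed.

Lemma seq_ub (s : seq X) (f : X -> R) :
  exists c, forall i, i \in s -> f i <= c.
Proof.
elim: s => [|a s [c IH]]; first by exists 0.
exists (Num.max c (f a)) => i; rewrite in_cons => /orP[/eqP ->|iS].
  by rewrite le_max lexx orbT.
by rewrite le_max IH.
Qed.

Lemma seq_ub1 (s : seq X) (f : X -> R) : (forall i, 0 <= f i < 1) ->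
  exists c, 0 <= c < 1 /\ forall i, i \in s -> f i <= c.
Proof.
move=> fp; elim: s => [|a s [c [c01 IH]]]; first by exists 0; rewrite lexx ltr01.
exists (Num.max c (f a)); split.
  by rewrite le_max gt_max; case/andP: c01 => -> ->; case/andP: (fp a) => -> ->.
move=> i; rewrite in_cons => /orP[/eqP ->|iS].
  by rewrite le_max lexx orbT.
by rewrite le_max IH.
Qed.

Section Pointed.
Variable x0 : X.
Definition pX : Type := X.
HB.instance Definition _ := Topological.on pX.
HB.instance Definition _ := isPointed.Build pX x0.
Lemma cover_of_compact : compact [set: X] -> cover_compact [set: X].
Proof.
move=> h; have h' : compact [set: pX] by exact: h.
rewrite compact_cover in h'; exact: h'.
Qed.
End Pointed.

Lemma bounded_X (x0 : X) : compact [set: X] -> exists M, forall x y, d x y <= M.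
Proof.
move=> Xc; have {}Xc := cover_of_compact x0 Xc.
have cv : [set: X] `<=` cover [set: X] (fun x => [set y | d x y < 1]).
  by move=> x _; exists x => //=; rewrite dxx ltr01.
have [D' _ cov] := Xc X setT (fun x => [set y | d x y < 1])
  (fun i _ => open_mball i 1) cv.
have [c hc] := seq_ub (finmap.enum_fset D') (fun i => d x0 i).
exists (2 + 2 * c) => x y.
have [i Di ix] := cov x I.
have [j Dj jy] := cov y I.
have := hc i Di; have := hc j Dj.
have := dtri x i y; have := dtri i x0 y; have := dtri x0 j y.
rewrite (dsym x i) (dsym i x0) /=.
move: ix jy => /= ix jy.
lra.
Qed.

Lemma uniformize (x0 : X) (F : X -> set X) : compact [set: X] -> local_contraction F ->
  exists b rho, [/\ 0 <= b < 1, 0 < rho &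
    forall y z, d y z < rho -> hausdorff_dist (F y) (F z) <= b * d y z].
Proof.
move=> Xc LC.
have /choice [f Hf] : forall x, exists p : R * R, [/\ 0 < p.1, 0 <= p.2 < 1 &
   forall y z, cball x p.1 y -> cball x p.1 z ->
     hausdorff_dist (F y) (F z) <= p.2 * d y z].
  move=> x; have [r [be [r0 [be01 H]]]] := LC x.
  by exists (r, be); split.
have {}Xc := cover_of_compact x0 Xc.
have cv : [set: X] `<=` cover [set: X] (fun x => [set y | d x y < (f x).1 / 2]).
  move=> x _; exists x => //=; rewrite dxx divr_gt0 //; by case: (Hf x).
have [D' _ cov] := Xc X setT (fun x => [set y | d x y < (f x).1 / 2])
  (fun i _ => open_mball i _) cv.
have [c c0 hc] := seq_lb (finmap.enum_fset D') (fun x => (f x).1 / 2)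
  (fun x => ltac:(by rewrite divr_gt0 //; case: (Hf x))).
have [bm [hbm hbmi]] := seq_ub1 (finmap.enum_fset D') (fun x => (f x).2)
  (fun x => ltac:(by case: (Hf x))).
exists bm, c; split => // y z yz.
have [i Di iy] := cov y I.
have h1 := hc i Di; have h2 := hbmi i Di.
case: (Hf i) => ri bi Hi.
move: iy h1 h2 => /= iy h1 h2.
have cy : cball i (f i).1 y by rewrite /cball /=; lra.
have cz : cball i (f i).1 z.
  by rewrite /cball /=; have := dtri i y z; lra.
apply: le_trans (Hi _ _ cy cz) _.
by rewrite ler_wpM2r // dge0.
Qed.


Lemma chain_ext x rho y y' : 
  (exists n z, [/\ z 0%N = x, z n = y & steps z n rho]) -> d y y' < rho ->
  (exists n z, [/\ z 0%N = x, z n = y' & steps z n rho]).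
Proof.
move=> [n [z [z0 zn sz]]] yy'.
exists n.+1, (fun i => if (i <= n)%N then z i else y'); split.
- by rewrite leq0n.
- by rewrite ltnn.
- move=> i; rewrite ltnS => hi; have [ilt|ni] := ltnP i n; last first.
    have -> : i = n by apply/eqP; rewrite eqn_leq hi ni.
    by rewrite /= leqnn zn.
  by rewrite /= hi; exact: sz.
Qed.

Lemma chain_comp rho x y : 0 < rho -> connected_component [set: X] x y ->
  exists n z, [/\ z 0%N = x, z n = y & steps z n rho].
Proof.
move=> r0 Cxy.
pose A := [set y | exists n z, [/\ z 0%N = x, z n = y & steps z n rho]].
have oA : open A.
  rewrite openE => a Aa; rewrite /interior /=.
  apply: filterS (nbhs_mball a _ r0) => y' ay'; exact: chain_ext Aa ay'.
have cA : closed A.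
  move=> p clp; have [a [Aa pa]] := clp _ (nbhs_mball p _ r0).
  by apply: chain_ext Aa _; rewrite dsym.
have Ax : A x by exists 0%N, (fun _ => x); split => // i.
have cC : connected (connected_component [set: X] x) by exact: component_connected.
have E := cC (connected_component [set: X] x `&` A)
  (ex_intro _ x (conj (connected_component_refl I) Ax))
  (ex_intro2 _ _ A oA erefl) (ex_intro2 _ _ A cA erefl).
by rewrite -E in Cxy; case: Cxy.
Qed.

Lemma iter_setiter (F : X -> set X) (s : nat -> X) :
  (forall t, F (s t) (s t.+1)) -> forall k j, setiter F k (s j) (s (j + k)%N).
Proof.
move=> Fs; elim => [|k IH] j /=; first by rewrite addn0.
by exists (s (j + k)%N) => //; rewrite addnS.
Qed.

End S.

Theorem proposition11 (R : realType) (X : metricType R) (F : X -> set X) :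
  [set: X] !=set0 -> compact [set: X] ->
  KX_valued F -> local_contraction F ->
  (forall r beta : R, 0 < r -> 0 <= beta < 1 ->
     chainable (X := X) r -> uniform_local_contraction F beta r ->
     Fix F !=set0) /\
  ((exists (n : nat) (C : 'I_n -> set X),
      (forall i, exists x, C i = connected_component [set: X] x) /\
      (forall i j, i != j -> C i `&` C j = set0) /\
      \bigcup_(i in [set: 'I_n]) C i = [set: X]) ->
   (forall x, connected (F x)) ->
   exists m : nat, (0 < m)%N /\ Fix (setiter F m) !=set0).
Proof.
move=> Xne Xc KX LC.
have [x0 _] := Xne.
have Fne x : F x !=set0 by case: (KX x).
have Fcpt x : compact (F x) by case: (KX x).
have [M HM] := bounded_X x0 Xc.
split.
- move=> r beta r0 hb ch [_ [_ U]].
  have PF : Plift F beta r.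
    apply: (Plift_of_H _ _ _ _ Fne HM) => y z yz; apply: (U y).
      by rewrite /cball /= mdistxx ltW.
    by rewrite /cball /= ltW.
  have [y0 Fy0] := Fne x0.
  have [n [z [z0 [zn sz]]]] := ch x0 y0.
  have ch1 : exists n z, steps z n r /\ setiter F 1 (z 0%N) (z n).
    by exists n, z; split => //; rewrite z0 zn; exists x0.
  have [x hx] := fix_main F beta r 1 Xc Xne Fne Fcpt hb r0 PF (ltn0Sn 0) ch1.
  by exists x; case: hx => u /= ->.
- move=> [n [C [HC [_ Hcov]]]] _.
  have [b [rho [hb r0 HH]]] := uniformize x0 F Xc LC.
  have PF := Plift_of_H F M b rho Fne HM HH.
  have /choice [f Hf] : forall x, exists y, F x y by move=> x; exact: Fne x.
  pose s t := iter t f x0.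
  have Fs : forall t, F (s t) (s t.+1) by move=> t; rewrite /s iterS; exact: Hf.
  have /choice [ci Hci] : forall x, exists i, C i x.
    move=> x; have : [set: X] x by [].
    by rewrite -Hcov => -[i _ Cix]; exists i.
  have key : forall j k, (j < k)%N -> ci (s j) = ci (s k) ->
      exists m : nat, (0 < m)%N /\ Fix (setiter F m) !=set0.
    move=> j k jk cijk.
    have Cj := Hci (s j); have Ck := Hci (s k).
    rewrite cijk in Cj.
    have [w Cw] := HC (ci (s k)).
    rewrite Cw in Cj Ck.
    have cc : connected_component [set: X] (s j) (s k).
      apply: connected_component_trans Ck.
      exact: connected_component_sym.
    have [n' [z [z0 zn sz]]] := chain_comp _ _ _ r0 cc.
    pose m := (k - j)%N.
    have km : k = (j + m)%N by rewrite /m subnKC // ltnW.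
    have m0 : (0 < m)%N by rewrite /m subn_gt0.
    have chm : exists n z, steps z n rho /\ setiter F m (z 0%N) (z n).
      exists n', z; split => //; rewrite z0 zn km; exact: iter_setiter.
    have [x hx] := fix_main F b rho m Xc Xne Fne Fcpt hb r0 PF m0 chm.
    by exists m; split => //; exists x.
  pose h (k : 'I_n.+1) := ci (s k).
  have : exists j k : 'I_n.+1, h j = h k /\ j != k.
    apply: contrapT => nex.
    have inj : injective h.
      move=> j k hjk; apply/eqP; apply/negPn/negP => jk; apply: nex.
      by exists j, k.
    by have := leq_card _ inj; rewrite !card_ord ltnn.
  move=> [j [k [hjk jk]]].
  have [ltjk|ltkj|eqjk] := ltngtP j k.
  + exact: key ltjk hjk.
  + exact: key ltkj (esym hjk).
  + by move: jk; rewrite (val_inj eqjk) eqxx.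
Qed.
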